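(* Let $M$ be a non-compact finite-dimensional smooth manifold and $E\neq\{0\}$ a locally convex space. Then $C^\infty_{vS}(M,E)$, with the vector space structure given by pointwise operations, is not a topological vector space.
   Context: Conventions: finite-dimensional manifolds are smooth, Hausdorff and $\sigma$-compact. Locally convex spaces are real Hausdorff locally convex topological vector spaces; differentiability is in the sense of Bastiani (Keller $C^r$-theory): for $U\subseteq E$ open and $f\colon U\to F$, $d^{(k)}f(x;y_1,\dots,y_k)=D_{y_k}\cdots D_{y_1}f(x)$ is the iterated directional derivative, and $f$ is smooth if all these exist and are continuous on $U\times E^k$ (and $f$ is continuous); manifolds modeled on locally convex spaces and smooth maps between them are defined via charts with smooth transition maps. Let $M$ be a finite-dimensional manifold of dimension $m$ and $e_1,\dots,e_m$ the standard basis of $\mathbb{R}^m$. For a locally convex space $E$, a continuous seminorm $p$ on $E$, an open $W\subseteq\mathbb{R}^m$, a smooth $g\colon W\to E$, a compact $A\subseteq W$ and $r\in\mathbb{N}_0$ put $\|g\|(r,A,p)=\sup\{p(d^{(k)}g(a;\alpha)) : a\in A,\ \alpha\in\{e_1,\dots,e_m\}^k,\ 0\le k\le r\}$ (for $E=\mathbb{R}^n$ one takes $p=\|\cdot\|_\infty$ and writes $\|g\|(r,A)$). For a manifold $X$ modeled on $E$, $f\in C^\infty(M,X)$, a chart $(U,\phi)$ of $M$, a compact $A\subseteq U$, a chart $(V,\psi)$ of $X$ with $f(A)\subseteq V$, a continuous seminorm $p$ on $E$, $r\in\mathbb{N}_0$ and $\epsilon>0$, the elementary neighborhood is $\mathcal{N}^r(f;A,(U,\phi),(V,\psi),p,\epsilon)=\{h\in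 C^\infty(M,X): h(A)\subseteq V,\ \|\psi\circ h\circ\phi^{-1}-\psi\circ f\circ\phi^{-1}\|(r,\phi(A),p)<\epsilon\}$. A basic neighborhood of $f$ is an intersection $\bigcap_{i\in\Lambda}\mathcal{N}^{r_i}(f;A_i,(U_i,\phi_i),(V_i,\psi_i),p_i,\epsilon_i)$ of elementary neighborhoods of $f$ such that the family $\{A_i\}_{i\in\Lambda}$ is locally finite in $M$. The very strong topology on $C^\infty(M,X)$ is the topology with the basic neighborhoods (of all $f$) as a basis; $C^\infty_{vS}(M,X)$ denotes $C^\infty(M,X)$ with this topology. When source or target is a vector space, its identity chart is used and omitted from the notation. *)

(* Defs.v *)
From mathcomp Require Import all_boot all_algebra all_classical all_reals all_analysis.
Import numFieldNormedType.Exports.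
Set Implicit Arguments.
Unset Strict Implicit.
Unset Printing Implicit Defensive.
Import GRing.Theory Num.Theory.
Local Open Scope classical_set_scope.
Local Open Scope ring_scope.

Section Bastiani.
Variables (R : realType) (m : nat).

Definition dquot (W : tvsType R) (g : 'rV[R]_m -> W) (x v : 'rV[R]_m) : R -> W :=
  fun t => t^-1 *: (g (x + t *: v) - g x).

Definition dirder (W : tvsType R) (g : 'rV[R]_m -> W) (x v : 'rV[R]_m) : W :=
  xget 0 [set l : W | dquot g x v @ (0 : R)^' --> l].

(* iterated directional derivative:
   iterd g [:: y1; ...; yk] x = d^(k) g (x; y1, ..., yk) = D_yk ... D_y1 g (x) *)
Definition iterd (W : tvsType R) (g : 'rV[R]_m -> W) (ys : seq 'rV[R]_m) :
    'rV[R]_m -> W :=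
  foldl (fun h y => fun x => dirder h x y) g ys.

(* the rows y_1, ..., y_k of a k x m matrix, i.e. an element of (R^m)^k *)
Definition rows (k : nat) (Y : 'M[R]_(k, m)) : seq 'rV[R]_m :=
  [seq row i Y | i <- enum 'I_k].

Definition bastiani_smooth (W : tvsType R) (U : set 'rV[R]_m) (g : 'rV[R]_m -> W) :=
  [/\ open U,
      (forall (ys : seq 'rV[R]_m) (y x : 'rV[R]_m), U x ->
         exists l : W, dquot (iterd g ys) x y @ (0 : R)^' --> l) &
      (forall k : nat,
         {within U `*` [set: 'M[R]_(k, m)],
            continuous (fun z : 'rV[R]_m * 'M[R]_(k, m) => iterd g (rows z.2) z.1)})].

Definition vS_seminorm (W : tvsType R) (r : nat) (A : set 'rV[R]_m) (p : W -> R)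
    (g : 'rV[R]_m -> W) : R :=
  sup [set z : R | exists (a : 'rV[R]_m) (alpha : seq 'rV[R]_m),
         [/\ A a, (size alpha <= r)%N,
             all (fun y => y \in [seq 'e_i | i <- enum 'I_m]) alpha &
             z = p (iterd g alpha a)]].

End Bastiani.

Definition continuous_seminorm (R : realType) (E : tvsType R) (p : E -> R) :=
  [/\ continuous p,
      (forall x y : E, p (x + y) <= p x + p y) &
      (forall (a : R) (x : E), p (a *: x) = `|a| * p x)].

Record chart (R : realType) (M : topologicalType) (m : nat) := Chart {
  cdom : set M;
  cmap : M -> 'rV[R]_m;
  cinv : 'rV[R]_m -> M }.

Section Manifolds.
Variables (R : realType) (M : topologicalType) (m : nat).

Definition is_chart (c : chart R M m) :=
  [/\ open (cdom c) /\ open (cmap c @` cdom c),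
      (forall x, cdom c x -> cinv c (cmap c x) = x),
      (forall y, (cmap c @` cdom c) y -> cdom c (cinv c y) /\ cmap c (cinv c y) = y),
      {within cdom c, continuous (cmap c)} &
      {within cmap c @` cdom c, continuous (cinv c)}].

Definition compatible (c1 c2 : chart R M m) :=
  bastiani_smooth (cmap c1 @` (cdom c1 `&` cdom c2)) (cmap c2 \o cinv c1) /\
  bastiani_smooth (cmap c2 @` (cdom c1 `&` cdom c2)) (cmap c1 \o cinv c2).

Definition smooth_manifold (atlas : set (chart R M m)) :=
  [/\ hausdorff_space M,
      (exists K : nat -> set M, (forall n, compact (K n)) /\ \bigcup_n K n = [set: M]),
      (forall c, atlas c -> is_chart c),
      (forall x : M, exists2 c, atlas c & cdom c x) &
      (forall c1 c2, atlas c1 -> atlas c2 -> compatible c1 c2)].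

(* charts of the smooth manifold (i.e. of the maximal atlas) *)
Definition manifold_chart (atlas : set (chart R M m)) (c : chart R M m) :=
  is_chart c /\ forall c', atlas c' -> compatible c c'.

Variable (E : tvsType R).

Definition smooth_map (atlas : set (chart R M m)) (f : M -> E) :=
  forall c, atlas c -> bastiani_smooth (cmap c @` cdom c) (f \o cinv c).

(* elementary neighbourhood N^r(f; A, (U, phi), p, eps) (target chart = identity) *)
Definition elem_nbhd (atlas : set (chart R M m)) (f : M -> E) (r : nat) (A : set M)
    (c : chart R M m) (p : E -> R) (eps : R) : set (M -> E) :=
  [set h | smooth_map atlas h /\
     vS_seminorm r (cmap c @` A) p
        (fun y => h (cinv c y) - f (cinv c y)) < eps].

Definition locally_finite (I : Type) (A : I -> set M) :=
  forall x : M, exists V, nbhs x V /\ finite_set [set i | A i `&` V !=set0].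

Definition basic_nbhd (atlas : set (chart R M m)) (f : M -> E) (B : set (M -> E)) :=
  exists (I : Type) (r : I -> nat) (A : I -> set M) (c : I -> chart R M m)
         (p : I -> E -> R) (eps : I -> R),
    [/\ forall i, [/\ manifold_chart atlas (c i), compact (A i), A i `<=` cdom (c i),
                      continuous_seminorm (p i) & 0 < eps i],
        locally_finite A &
        B = [set h | smooth_map atlas h /\
                     forall i, elem_nbhd atlas f (r i) (A i) (c i) (p i) (eps i) h]].

Definition vS_open (atlas : set (chart R M m)) (O : set (M -> E)) :=
  O `<=` smooth_map atlas /\
  forall f, O f -> exists g B, [/\ smooth_map atlas g, basic_nbhd atlas g B, B f & B `<=` O].

Definition vS_is_tvs (atlas : set (chart R M m)) :=
  (forall O f g, vS_open atlas O -> smooth_map atlas f -> smooth_map atlas g ->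
     O (fun x => f x + g x) ->
     exists U V, [/\ vS_open atlas U, vS_open atlas V, U f, V g &
       forall f' g', U f' -> V g' -> O (fun x => f' x + g' x)]) /\
  (forall O (a : R) f, vS_open atlas O -> smooth_map atlas f ->
     O (fun x => a *: f x) ->
     exists (S : set R) V, [/\ open S, S a, vS_open atlas V, V f &
       forall b h, S b -> V h -> O (fun x => b *: h x)]).

End Manifolds.

(* Main.v *)
Require Import Defs.
From mathcomp Require Import all_boot all_algebra all_classical all_reals all_analysis.
From mathcomp Require Import all_order ring lra finmap.
From HB Require Import structures.
Import numFieldNormedType.Exports.
Import Order.TTheory GRing.Theory Num.Theory.
Local Open Scope classical_set_scope.
Local Open Scope ring_scope.
Set Implicit Arguments.
Unset Strict Implicit.

Section Mink.
Variables (R : realType) (E : tvsType R).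

Lemma convexC (C : set (convex_lmodType E)) (x y : E) (l : R) : convex_set C -> C x -> C y -> 0 <= l -> l <= 1 -> C (l *: x + (1 - l) *: y).
Proof.
move=> cC Cx Cy l0 l1.
have := cC x y (Itv01 l0 l1).
by move=> /(_ (mem_set Cx) (mem_set Cy)) /set_mem.
Qed.

Variable D : set E.
Hypothesis D0 : D 0.
Hypothesis DN : forall x, D x -> D (- x).
Hypothesis Dconv : forall x y l, D x -> D y -> 0 <= l -> l <= 1 -> D (l *: x + (1 - l) *: y).
Hypothesis Dabs : forall x, exists2 t, 0 < t & D (t^-1 *: x).

Let S x := [set t : R | 0 < t /\ D (t^-1 *: x)].
Definition mink x := inf (S x).

Let S_ne x : S x !=set0.
Proof. by have [t t0 Dt] := Dabs x; exists t. Qed.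
Let S_lb x : has_lbound (S x).
Proof. by exists 0 => t [t0 _]; exact: ltW. Qed.

Lemma mink_le x t : 0 < t -> D (t^-1 *: x) -> mink x <= t.
Proof. by move=> t0 Dt; apply: ge_inf (S_lb x) _ _. Qed.

Lemma mink_ge0 x : 0 <= mink x.
Proof. by apply: lb_le_inf (S_ne x) _ => t [t0 _]; exact: ltW. Qed.

Lemma mink_ge x c : (forall t, 0 < t -> D (t^-1 *: x) -> c <= t) -> c <= mink x.
Proof. by move=> H; apply: lb_le_inf (S_ne x) _ => t [t0 Dt]; exact: H. Qed.

Lemma mink0 : mink 0 = 0.
Proof.
apply/eqP; rewrite eq_le mink_ge0 andbT.
apply/unstable.ler_gtP => e e0; apply: mink_le => //; by rewrite scaler0.
Qed.

Lemma mink_Zle a x : a != 0 -> mink (a *: x) <= `|a| * mink x.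
Proof.
move=> a0; have na0 : 0 < `|a| by rewrite normr_gt0.
rewrite -ler_pdivrMl //; apply: mink_ge => t t0 Dt.
rewrite ler_pdivrMl //; apply: mink_le; first exact: mulr_gt0.
rewrite scalerA.
have -> : (`|a| * t)^-1 * a = (a / `|a|) * t^-1.
  by field; rewrite (gt_eqF t0) (gt_eqF na0).
rewrite -scalerA.
case: (ltrgtP a 0) => [an|ap|/eqP]; last by rewrite (negPf a0).
- rewrite ltr0_norm // invrN mulrN divff // scaleN1r; exact: DN.
- by rewrite gtr0_norm // divff ?gt_eqF // scale1r.
Qed.

Lemma minkZ a x : mink (a *: x) = `|a| * mink x.
Proof.
have [->|a0] := eqVneq a 0; first by rewrite scale0r mink0 normr0 mul0r.
apply/eqP; rewrite eq_le mink_Zle //=.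
have na0 : 0 < `|a| by rewrite normr_gt0.
rewrite -ler_pdivlMl //.
have := @mink_Zle (a^-1) (a *: x); rewrite invr_eq0 => /(_ a0).
by rewrite scalerA mulVf // scale1r normrV ?unitfE.
Qed.

Lemma minkD x y : mink (x + y) <= mink x + mink y.
Proof.
have key s t : 0 < s -> D (s^-1 *: x) -> 0 < t -> D (t^-1 *: y) -> mink (x + y) <= s + t.
  move=> s0 Ds t0 Dt; apply: mink_le; first exact: addr_gt0.
  have st0 : 0 < s + t by exact: addr_gt0.
  have := @Dconv _ _ (s / (s + t)) Ds Dt.
  move/(_ (divr_ge0 (ltW s0) (ltW st0))).
  rewrite ler_pdivrMr // mul1r lerDl (ltW t0) => /(_ isT).
  have -> : 1 - s / (s + t) = t / (s + t) by field; rewrite (gt_eqF st0).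
  rewrite !scalerA.
  have -> : s / (s + t) * s^-1 = (s + t)^-1 by field; rewrite ?(gt_eqF t0) ?(gt_eqF s0) ?(gt_eqF st0).
  have -> : t / (s + t) * t^-1 = (s + t)^-1 by field; rewrite ?(gt_eqF t0) ?(gt_eqF s0) ?(gt_eqF st0).
  by rewrite -scalerDr.
rewrite -lerBlDr; apply: mink_ge => t t0 Dt.
rewrite lerBlDr (addrC t) -lerBlDr; apply: mink_ge => s s0 Ds.
by rewrite lerBlDr (addrC s); apply: key.
Qed.

Lemma minkN x : mink (- x) = mink x.
Proof. by rewrite -scaleN1r minkZ normrN normr1 mul1r. Qed.

Hypothesis Dnb : nbhs 0 D.

Lemma mink_cont : continuous mink.
Proof.
move=> y; apply/cvgrPdist_le => e e0.
apply: filterS (nbhsT y (nbhs0Z (lt0r_neq0 e0) Dnb)).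
move=> _ [_ [d Dd <-] <-] /=.
have h1 : mink (e *: d) <= e.
  rewrite minkZ gtr0_norm // -[X in _ <= X]mulr1 ler_pM2l //.
  by apply: mink_le => //; rewrite invr1 scale1r.
have h2 : mink (- (e *: d)) <= e by rewrite minkN.
have h3 := minkD y (e *: d).
have h4 := minkD (y + e *: d) (- (e *: d)).
rewrite addrK in h4.
rewrite ler_norml; apply/andP; split; lra.
Qed.
End Mink.

Lemma absorb (R : realType) (E : tvsType R) (D : set E) : nbhs 0 D -> forall x : E, exists2 t : R, 0 < t & D (t^-1 *: x).
Proof.
move=> D0 x.
have /= := scale_continuous ((0 : R^o), x) D.
rewrite scale0r => /(_ D0) [] /= B [B1 B2] BU.
have /nbhs_ballP [e e0 eB] := B1.
exists (e / 2)^-1; first by rewrite invr_gt0 divr_gt0.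
rewrite invrK; apply: (BU (e / 2, x)); split => /=; last exact: nbhs_singleton.
apply: eB; rewrite /ball /= sub0r normrN ger0_norm ?divr_ge0 ?ltW //.
have e0p : 0 < e := e0; lra.
Qed.

Lemma seminorm_exists (R : realType) (E : tvsType R) (x0 : E) :
  hausdorff_space E -> x0 != 0 ->
  exists p : E -> R, continuous_seminorm p /\ 1 <= p x0.
Proof.
move=> HE x0n.
have [A [B [nA [nB AB0]]]] : exists A B, nbhs (0 : E) A /\ nbhs x0 B /\ ~ (A `&` B !=set0).
  apply: contrapT => H; move: x0n; rewrite eq_sym => /eqP; apply.
  apply: HE => A B nA nB; apply: contrapT => h; apply: H; by exists A, B.
have nAx0 : ~ A x0 by move=> Ax0; apply: AB0; exists x0; split => //; exact: nbhs_singleton.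
have [Bs Bconv [Bop Bnb]] := @locally_convex R E.
have [C [BC C0] CA] : filter_from [set U | Bs U /\ U 0] id A := Bnb 0 A nA.
have nC : nbhs (0 : E) C by apply: open_nbhs_nbhs; split => //; exact: Bop.
have cC := Bconv C (mem_set BC).
pose D := [set x : E | C x /\ C (- x)].
have D0 : D 0 by split => //; rewrite oppr0.
have DN : forall x, D x -> D (- x) by move=> x [Cx CNx]; split => //; rewrite opprK.
have Dconv : forall x y l, D x -> D y -> 0 <= l -> l <= 1 -> D (l *: x + (1 - l) *: y).
  move=> x y l [Cx CNx] [Cy CNy] l0 l1; split; first exact: convexC.
  rewrite opprD -!scalerN; exact: convexC.
have Dnb : nbhs (0 : E) D.
  apply: filterI => //; apply: filterS (nbhs0N nC) => x [c Cc <-].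
  by rewrite opprK.
have Dabs := @absorb R E D Dnb.
exists (mink D); split; first split.
- by apply: mink_cont.
- by move=> x y; apply: minkD.
- by move=> a x; apply: minkZ.
- apply: mink_ge => // t t0 Dt; rewrite leNgt; apply/negP => t1.
  apply: nAx0; apply: CA.
  have := Dconv _ _ t Dt D0 (ltW t0) (ltW t1).
  by rewrite scaler0 addr0 scalerA divff ?gt_eqF // scale1r => -[].
Qed.

Section PT.
Variables (M : topologicalType) (m0 : M).
Definition pM : Type := (fun _ : M => Topological.sort M) m0.
HB.instance Definition _ := Topological.on pM.
HB.instance Definition _ := isPointed.Build pM m0.
Lemma compact_pM (A : set M) : compact A -> cover_compact (A : set pM).
Proof. by move=> cA; rewrite -compact_cover. Qed.
Lemma compact_pM' (A : set M) : cover_compact (A : set pM) -> compact A.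
Proof. by move=> cA; have := cA; rewrite -compact_cover. Qed.
End PT.

Lemma locfin_seq (M : topologicalType) (K : nat -> set M) :
  (forall n, compact (K n)) -> \bigcup_n K n = [set: M] -> ~ compact [set: M] ->
  exists x : nat -> M, forall y : M, exists V : set M, nbhs y V /\ finite_set [set n | V (x n)].
Proof.
move=> cK UK ncM.
case: (pselect ([set: M] !=set0)) => [[m0 _]|H]; last first.
  exfalso; apply: ncM; have -> : [set: M] = set0.
    by apply/seteqP; split => // y _; apply: H; exists y.
  exact: compact0.
have : ~ cover_compact ([set: M] : set (@pM M m0)) by move/(@compact_pM' M m0).
move/existsNP => [I /existsNP [D /existsNP [f /not_implyP [fop /not_implyP [cov nfin]]]]].
have hF n : exists F : {fset I}, {subset F <= D} /\ K n `<=` cover [set` F] f.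
  have := @compact_pM M m0 _ (cK n) => /(_ I D f fop).
  move=> /(_ (fun y _ => cov y Logic.I)) [F FD KF]; by exists F.
have [F HF] := choice hF.
pose G := fix G n := if n is n'.+1 then (G n' `|` F n)%fset else F 0%N.
have GD n : {subset G n <= D}.
  elim: n => [|n IH] /=; first by case: (HF 0%N).
  by move=> i; rewrite in_fsetU => /orP [/IH //|]; case: (HF n.+1) => + _; apply.
have Gmono m n : (m <= n)%N -> {subset G m <= G n}.
  elim: n => [|n IH]; first by rewrite leqn0 => /eqP ->.
  rewrite leq_eqVlt => /orP [/eqP -> //|]; rewrite ltnS => /IH H i /H Gi /=.
  by rewrite in_fsetU Gi.
have FG n : {subset F n <= G n}.
  by case: n => [|n] i //= Fi; rewrite in_fsetU Fi orbT.
have KG n : K n `<=` cover [set` G n] f.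
  move=> y /(proj2 (HF n)) [i Fi fiy]; exists i => //; exact: FG.
have hx n : exists x : M, ~ cover [set` G n] f x.
  apply: contrapT => H; apply: nfin; exists (G n) => [|y _]; first exact: GD.
  by apply: contrapT => Hy; apply: H; exists y.
have [x Hx] := choice hx.
exists x => y.
have : [set: M] y by [].
rewrite -UK => -[j _ /KG [i Gi fiy]].
exists (f i); split.
  apply: open_nbhs_nbhs; split => //; apply: fop; have := GD j i Gi; by rewrite in_setE.
apply: sub_finite_set (finite_II j) => n /= fixn.
rewrite ltnNge; apply/negP => jn; apply: (Hx n); exists i => //.
exact: (Gmono j n jn).
Qed.

Section Cst.
Variables (R : realType) (m : nat) (W : tvsType R).
Hypothesis HW : hausdorff_space W.

Lemma dquot_cst (c : W) (x v : 'rV[R]_m) : dquot (fun _ => c) x v = fun _ => 0.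
Proof. by apply: funext => t; rewrite /dquot subrr scaler0. Qed.

Lemma dirder_cst (c : W) (x v : 'rV[R]_m) : dirder (fun _ => c) x v = 0.
Proof.
rewrite /dirder dquot_cst.
case: xgetP => [l _ Hl|H]; last by exfalso; apply: (H 0); exact: cvg_cst.
have := @cvg_unique W HW ((fun _ : R => (0:W)) @ (0:R)^') _ l 0 Hl; apply.
exact: cvg_cst.
Qed.

Lemma iterd_cst (c : W) (ys : seq 'rV[R]_m) :
  iterd (fun _ => c) ys = fun _ => if ys is [::] then c else 0.
Proof.
case: ys => [//|y ys] /=.
have -> : (fun x => dirder (fun _ => c) x y) = fun _ => 0.
  by apply: funext => x; rewrite dirder_cst.
elim: ys => [//|z zs IH] /=.
have -> : (fun x => dirder (fun _ => (0 : W)) x z) = fun _ => 0.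
  by apply: funext => x; rewrite dirder_cst.
exact: IH.
Qed.

Lemma smooth_cst (U : set 'rV[R]_m) (c : W) : open U -> bastiani_smooth U (fun _ => c).
Proof.
move=> oU; split => //.
  move=> ys y x _; exists 0; rewrite iterd_cst dquot_cst; exact: cvg_cst.
move=> k; apply: continuous_subspaceT.
have -> : (fun z : 'rV[R]_m * 'M[R]_(k, m) => iterd (fun _ => c) (rows z.2) z.1)
   = fun _ => if k is 0%N then c else 0.
  apply: funext => z; rewrite iterd_cst.
  have : size (rows z.2) = k by rewrite /rows size_map size_enum_ord.
  by case: (rows z.2) => [<-|? ? <-].
move=> z; exact: cvg_cst.
Qed.

Lemma vS_set1 (a : 'rV[R]_m) (p : W -> R) g : vS_seminorm 0 [set a] p g = p (g a).
Proof.
rewrite /vS_seminorm.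
have -> : [set z : R | exists (a0 : 'rV[R]_m) (alpha : seq 'rV[R]_m),
         [/\ [set a] a0, (size alpha <= 0)%N,
             all (fun y => y \in [seq 'e_i | i <- enum 'I_m]) alpha &
             z = p (iterd g alpha a0)]] = [set p (g a)].
  apply/seteqP; split.
    by move=> z [a' [[|y al] [/= -> sz _ ->]]].
  by move=> z ->; exists a, [::]; split.
exact: sup1.
Qed.
End Cst.

Unset Implicit Arguments.

Theorem corollary3p2 (R : realType) (M : topologicalType) (m : nat)
  (atlas : set (chart R M m)) (E : tvsType R) :
  smooth_manifold atlas -> ~ compact [set: M] ->
  hausdorff_space E -> (exists x : E, x != 0) ->
  ~ vS_is_tvs E atlas.
Proof.
move=> [Hs [K [cK UK]] Hch Hcov Hcomp] ncM HE [x0 x0n] [_ Hscale].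
have [p [ps px0]] := seminorm_exists HE x0n.
have [x Hx] := locfin_seq cK UK ncM.
have hc n : exists c, atlas c /\ cdom c (x n).
  by have [c ac dc] := Hcov (x n); exists c.
have [cs Hcs] := choice hc.
pose eps (n : nat) : R := (n.+1%:R)^-1.
have eps0 n : 0 < eps n by rewrite /eps invr_gt0 ltr0n.
pose O := [set h : M -> E | smooth_map atlas h /\
  forall i, elem_nbhd atlas (fun _ => 0) 0 [set x i] (cs i) p (eps i) h].
have smc (c : E) : smooth_map atlas (fun _ => c).
  move=> ch /Hch [[_ oim] _ _ _ _]; exact: smooth_cst.
have Obasic : basic_nbhd atlas (fun _ => 0) O.
  exists nat, (fun _ => 0%N), (fun i => [set x i]), cs, (fun _ => p), eps; split => //.
    move=> i; split => //.
    - split; first exact: Hch (proj1 (Hcs i)).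
      by move=> c' ac'; apply: Hcomp => //; exact: (proj1 (Hcs i)).
    - exact: compact_set1.
    - by move=> _ ->; exact: (proj2 (Hcs i)).
  move=> y; have [V [nV fV]] := Hx y; exists V; split => //.
  apply: sub_finite_set fV => i /= [z [-> Vz]] //.
have Oopen : vS_open atlas O.
  split; first by move=> h [].
  by move=> f Of; exists (fun _ => 0), O; split.
have O0 : O (fun _ => 0 *: x0).
  have -> : (fun _ : M => 0 *: x0) = (fun _ => 0) by apply: funext => ?; rewrite scale0r.
  split => // i; split => //.
  rewrite image_set1 vS_set1 subrr.
  have -> : p 0 = 0.
    by have [_ _ pZ] := ps; rewrite -(scale0r (0 : E)) pZ normr0 mul0r.
  exact: eps0.
have [S [V [So S0 _ Vf HSV]]] := Hscale O 0 (fun _ => x0) Oopen (smc x0) O0.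
have : nbhs (0 : R) S by apply: open_nbhs_nbhs.
move=> /nbhs_ballP [e e0 eS].
have e0p : 0 < e := e0.
have b0 : 0 < e / 2 by rewrite divr_gt0.
have Sb : S (e / 2).
  apply: eS; rewrite /ball /= sub0r normrN ger0_norm ?ltW //; lra.
have [k Hk] := ltr_add_invr b0; rewrite add0r in Hk.
have [_ /(_ k) [_]] := HSV (e / 2) (fun _ => x0) Sb Vf.
rewrite image_set1 vS_set1 subr0.
have [_ _ pZ] := ps; rewrite pZ gtr0_norm //.
rewrite /eps => H.
have : e / 2 <= e / 2 * p x0 by rewrite -[X in X <= _]mulr1 ler_pM2l.
move=> h; have := lt_trans (le_lt_trans h H) Hk; by rewrite ltxx.
Qed.
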